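(* Let $F\in\mathbb{Z}[x_0,\ldots,x_n]$ be a form. Then $\mathrm{o}(F)=n+1$ if and only if $\mathrm{o}(F_p)=n+1$ for all except finitely many primes $p$.
   Context: $F_p\in\mathbb{F}_p[x_0,\dots,x_n]$ denotes the reduction of $F$ modulo $p$. The order of a form over a field $K$ is the smallest integer $m$ such that the form is equivalent, via an invertible linear change of variables over $K$, to a form explicitly involving only $m$ variables; $\mathrm{o}(F)$ is the order over $\mathbb{Q}$ and $\mathrm{o}(F_p)$ the order over $\mathbb{F}_p$. *)

(* Defs.v *)
From HB Require Import structures.
From mathcomp Require Import all_boot all_order all_algebra.
From mathcomp Require Import mpoly.
Set Implicit Arguments. Unset Strict Implicit. Unset Printing Implicit Defensive.
Import GRing.Theory.
Local Open Scope ring_scope.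

Definition lin_subst (K : fieldType) (N : nat) (A : 'M[K]_N) : N.-tuple {mpoly K[N]} :=
  [tuple \sum_(j < N) A i j *: 'X_j | i < N].

Definition involves_only (K : fieldType) (N : nat) (G : {mpoly K[N]}) (m : nat) : Prop :=
  forall mono : 'X_{1..N}, mono \in msupp G ->
    forall i : 'I_N, (m <= i)%N -> mono i = 0%N.

Definition equiv_to_m_vars (K : fieldType) (N : nat) (F : {mpoly K[N]}) (m : nat) : Prop :=
  exists A : 'M[K]_N, A \in unitmx /\ involves_only (F \mPo lin_subst A) m.

Definition is_order (K : fieldType) (N : nat) (F : {mpoly K[N]}) (m : nat) : Prop :=
  equiv_to_m_vars F m /\ forall k, equiv_to_m_vars F k -> (m <= k)%N.

Definition to_rat (N : nat) (F : {mpoly int[N]}) : {mpoly rat[N]} :=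
  map_mpoly (fun z : int => z%:~R) F.

Definition red_mod (p N : nat) (F : {mpoly int[N]}) : {mpoly 'F_p[N]} :=
  map_mpoly (fun z : int => z%:~R) F.

(* Main.v *)
From HB Require Import structures.
From mathcomp Require Import all_boot all_order all_algebra.
From mathcomp Require Import mpoly.
Require Import Defs.
From mathcomp Require Import fingroup perm.
From mathcomp Require Import zify.
Set Implicit Arguments. Unset Strict Implicit. Unset Printing Implicit Defensive.
Import GRing.Theory Num.Theory.
Local Open Scope ring_scope.

Section Chain.
Variables (R : comRingType) (n k : nat) (t : n.-tuple {mpoly R[k]}) (j : 'I_k).

Definition CR (P : {mpoly R[n]}) :=
  (P \mPo t)^`M(j) = \sum_(i < n) (P^`M(i) \mPo t) * (tnth t i)^`M(j).

Lemma CR_add P Q : CR P -> CR Q -> CR (P + Q).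
Proof.
rewrite /CR => hP hQ; rewrite comp_mpolyD mderivD hP hQ -big_split /=.
by apply: eq_bigr => i _; rewrite mderivD comp_mpolyD mulrDl.
Qed.

Lemma CR_scale c P : CR P -> CR (c *: P).
Proof.
rewrite /CR => hP; rewrite comp_mpolyZ mderivZ hP scaler_sumr.
by apply: eq_bigr => i _; rewrite mderivZ comp_mpolyZ scalerAl.
Qed.

Lemma CR_mul P Q : CR P -> CR Q -> CR (P * Q).
Proof.
rewrite /CR => hP hQ; rewrite rmorphM /= mderivM hP hQ.
rewrite mulr_suml mulr_sumr -big_split /=.
apply: eq_bigr => i _; rewrite mderivM comp_mpolyD !rmorphM /= mulrDl.
congr (_ + _); first by rewrite -!mulrA [_ * (Q \mPo t)]mulrC.
by rewrite mulrA.
Qed.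

Lemma CR_1 : CR 1.
Proof.
rewrite /CR -mpolyC1 comp_mpolyC mderivC big1 // => i _.
by rewrite mderivC comp_mpoly0 mul0r.
Qed.

Lemma mderivXU (l i : 'I_n) : ('X_l : {mpoly R[n]})^`M(i) = (l == i)%:R.
Proof.
rewrite mderivX mnm1E; case: eqP => [->|_]; last by rewrite scale0r.
have ->: (U_(i) - U_(i) = 0)%MM by apply/mnmP => x; rewrite mnmBE mnm0E subnn.
by rewrite mpolyX0 scale1r.
Qed.

Lemma CR_X l : CR 'X_l.
Proof.
rewrite /CR comp_mpolyXU (bigD1 l) //= big1 => [|i /negbTE ne].
  by rewrite mderivXU eqxx comp_mpoly1 mul1r addr0 -tnth_nth.
by rewrite mderivXU eq_sym ne comp_mpoly0 mul0r.
Qed.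

Lemma CR_prod (I : Type) (r : seq I) (f : I -> {mpoly R[n]}) :
  (forall i, CR (f i)) -> CR (\prod_(i <- r) f i).
Proof.
move=> h; elim: r => [|a r ih]; first by rewrite big_nil; exact: CR_1.
by rewrite big_cons; apply: CR_mul.
Qed.

Lemma CR_exp P e : CR P -> CR (P ^+ e).
Proof.
move=> h; elim: e => [|e ih]; first by rewrite expr0; exact: CR_1.
by rewrite exprS; apply: CR_mul.
Qed.

Lemma chain_rule P : CR P.
Proof.
elim/mpolyind: P => [|c m p _ _ ih].
  by rewrite /CR comp_mpoly0 mderiv0 big1 // => i _; rewrite mderiv0 comp_mpoly0 mul0r.
apply: CR_add => //; apply: CR_scale; rewrite mpolyXE_id.
by apply: CR_prod => i; apply: CR_exp; apply: CR_X.
Qed.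

End Chain.
Section Lin.
Variables (K : fieldType) (N : nat).

Lemma tnth_lin (A : 'M[K]_N) i : tnth (lin_subst A) i = \sum_(j < N) A i j *: 'X_j.
Proof. by rewrite tnth_mktuple. Qed.

Lemma scale1C (c : K) : c *: (1 : {mpoly K[N]}) = c%:MP.
Proof. by rewrite -mul_mpolyC mulr1. Qed.

Lemma comp_lin_tnth (A B : 'M[K]_N) i :
  tnth (lin_subst A) i \mPo lin_subst B = tnth (lin_subst (A *m B)) i.
Proof.
rewrite !tnth_lin raddf_sum /=.
under eq_bigr => j _ do rewrite comp_mpolyZ comp_mpolyXU -tnth_nth tnth_lin scaler_sumr.
rewrite exchange_big /=; apply: eq_bigr => l _.
by rewrite mxE scaler_suml; apply: eq_bigr => j _; rewrite scalerA.
Qed.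

Lemma compA_lin (A B : 'M[K]_N) (P : {mpoly K[N]}) :
  (P \mPo lin_subst A) \mPo lin_subst B = P \mPo lin_subst (A *m B).
Proof.
rewrite (comp_mpolyEX P (lin_subst A)) (comp_mpolyEX P (lin_subst (A *m B))) raddf_sum /=.
apply: eq_bigr => m _; rewrite comp_mpolyZ; congr (_ *: _).
rewrite !comp_mpolyX rmorph_prod /=; apply: eq_bigr => i _.
by rewrite rmorphXn /= comp_lin_tnth.
Qed.

Lemma comp_lin1 (P : {mpoly K[N]}) : P \mPo lin_subst 1%:M = P.
Proof.
have ->: lin_subst (1%:M : 'M[K]_N) = [tuple 'X_i | i < N].
  apply: eq_from_tnth => i; rewrite tnth_lin tnth_mktuple (bigD1 i) //= big1.
    by rewrite mxE eqxx scale1r addr0.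
  by move=> j /negbTE ne; rewrite mxE eq_sym ne scale0r.
exact: comp_mpoly_id.
Qed.

Lemma deriv_lin (A : 'M[K]_N) i j : (tnth (lin_subst A) i)^`M(j) = (A i j)%:MP.
Proof.
rewrite tnth_lin (big_morph _ (@mderivD _ _ j) (mderiv0 _ _)) (bigD1 j) //= big1.
  by rewrite mderivZ mderivXU eqxx addr0 scale1C.
by move=> l /negbTE ne; rewrite mderivZ mderivXU ne scaler0.
Qed.

Lemma chainA (A : 'M[K]_N) (P : {mpoly K[N]}) j :
  (P \mPo lin_subst A)^`M(j) = (\sum_i A i j *: P^`M(i)) \mPo lin_subst A.
Proof.
rewrite chain_rule raddf_sum /=; apply: eq_bigr => i _.
by rewrite deriv_lin comp_mpolyZ mulrC mul_mpolyC.
Qed.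

End Lin.

Section Homog.
Variables (K : fieldType) (N : nat).

Lemma homog_bigprod (I : Type) (r : seq I) (f : I -> {mpoly K[N]}) (e : I -> nat) :
  (forall i, f i \is (e i).-homog) -> \prod_(i <- r) f i \is (\sum_(i <- r) e i)%N.-homog.
Proof.
move=> h; elim: r => [|a r ih]; first by rewrite !big_nil dhomog1.
by rewrite !big_cons; apply: dhomogM.
Qed.

Lemma homog_lin (A : 'M[K]_N) i : tnth (lin_subst A) i \is 1.-homog.
Proof.
rewrite tnth_lin; apply: (big_ind (fun p : {mpoly K[N]} => p \is 1.-homog)).
- exact: dhomog0.
- by move=> x y; apply: dhomogD.
by move=> j _; apply: dhomogZ; rewrite dhomogX /= mdeg1.
Qed.

Lemma homog_comp_lin d (A : 'M[K]_N) (F : {mpoly K[N]}) :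
  F \is d.-homog -> F \mPo lin_subst A \is d.-homog.
Proof.
move=> hF; rewrite comp_mpolyE big_seq.
apply: (big_ind (fun p : {mpoly K[N]} => p \is d.-homog)).
- exact: dhomog0.
- by move=> x y; apply: dhomogD.
move=> m hm; apply: dhomogZ; rewrite -(dhomog_mf hF hm) /=. rewrite mdegE.
apply: homog_bigprod => i; by move/(dhomogMn (m i)): (homog_lin A i); rewrite mul1n.
Qed.

End Homog.

Section E12.
Variables (K : fieldType) (n : nat).

Definition Dv (v : 'rV[K]_n.+1) (P : {mpoly K[n.+1]}) := \sum_i v 0 i *: P^`M(i).

Lemma E1 (F : {mpoly K[n.+1]}) : equiv_to_m_vars F n ->
  exists v : 'rV[K]_n.+1, v != 0 /\ Dv v F = 0.
Proof.
case=> A [uA hinv]; set G := F \mPo lin_subst A.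
have dG : G^`M(ord_max) = 0.
  apply/mpolyP => m; rewrite mcoeff_deriv mcoeff0 memN_msupp_eq0 ?mul0rn //.
  apply/negP => /hinv /(_ ord_max (leqnn n)).
  by rewrite mnmDE mnm1E eqxx addn1.
exists (\row_i A i ord_max); split.
  apply/eqP => v0; have := mulVmx uA; move/matrixP/(_ ord_max ord_max).
  rewrite !mxE big1 ?eqxx => [/eqP|j _]; first by rewrite eq_sym oner_eq0.
  have: (\row_i A i ord_max) 0 j = 0 by rewrite v0 mxE.
  by rewrite mxE => ->; rewrite mulr0.
have h0 : Dv (\row_i A i ord_max) F \mPo lin_subst A = 0.
  rewrite -dG /G chainA /Dv; congr (_ \mPo _); apply: eq_bigr => i _; by rewrite mxE.
rewrite -[Dv _ F]comp_lin1 -(mulmxV uA) -compA_lin h0.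
exact: comp_mpoly0.
Qed.

Lemma E2 d (F : {mpoly K[n.+1]}) (v : 'rV[K]_n.+1) :
  F \is d.-homog -> (forall k, (0 < k <= d)%N -> k%:R != 0 :> K) ->
  v != 0 -> Dv v F = 0 -> equiv_to_m_vars F n.
Proof.
move=> hF hchar /matrix0Pn [i0 [k hk]] hD.
have {i0} hk : v 0 k != 0 by rewrite (ord1 i0) in hk.
pose s := tperm k ord_max.
pose B : 'M[K]_n.+1 := \matrix_(i, j) if j == ord_max then v 0 (s i) else (i == j)%:R.
pose A := perm_mx s *m B.
have Amax : forall i, A i ord_max = v 0 i.
  move=> i; rewrite /A -row_permE !mxE eqxx /s tpermK //.
have uA : A \in unitmx.
  rewrite unitmx_mul unitmx_perm /= unitmxE unitfE -det_tr det_trig.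
    rewrite big_ord_recr /= big1 ?mul1r.
      by rewrite !mxE eqxx /s tpermR.
    move=> i _; rewrite !mxE; have ->: (widen_ord (leqnSn n) i == ord_max) = false.
      by apply/negbTE; rewrite -val_eqE /= neq_ltn ltn_ord.
    by rewrite eqxx.
  apply/is_trig_mxP => i j lij; rewrite !mxE.
  have ->: (i == ord_max) = false.
    by apply/negbTE; rewrite -val_eqE /= neq_ltn (leq_trans lij) // -ltnS.
  by have ->: (j == i) = false by apply/negbTE; rewrite -val_eqE /= gtn_eqF.
exists A; split => //.
set G := F \mPo lin_subst A.
have dG : G^`M(ord_max) = 0.
  rewrite /G chainA; have ->: \sum_i A i ord_max *: F^`M(i) = Dv v F.
    by apply: eq_bigr => i _; rewrite Amax.
  by rewrite hD comp_mpoly0.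
have hG : G \is d.-homog by apply: homog_comp_lin.
move=> m mG i hi.
have -> : i = ord_max by apply/val_inj; apply/eqP; rewrite eqn_leq hi -ltnS ltn_ord.
apply/eqP; apply: contraT => hm.
have := congr1 (fun p => p@_(m - U_(ord_max))%MM) dG.
rewrite /= mcoeff_deriv mcoeff0 submK ?lep1mP // mnmBE mnm1E eqxx.
rewrite subn1 prednK ?lt0n //.
have nz : G@_m * (m ord_max)%:R != 0.
  rewrite mulf_neq0 //; first by rewrite -mcoeff_msupp.
  apply: hchar; rewrite lt0n hm /=.
  rewrite -(dhomog_mf hG mG) /= mdegE (bigD1 ord_max) //=; exact: leq_addr.
by rewrite -mulr_natr => /eqP; rewrite (negbTE nz).
Qed.

End E12.

Section Main.
Variables (n d : nat) (F : {mpoly int[n.+1]}).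

Definition Ls : seq 'X_{1..n.+1} := flatten [seq msupp (F^`M(i)) | i <- enum 'I_n.+1].
Definition Wt : 'M[int]_(n.+1, size Ls) := \matrix_(i, j) (F^`M(i))@_(nth 0%MM Ls j).

Lemma coefD (K : fieldType) (v : 'rV[K]_n.+1) m :
  (Dv v (map_mpoly intr F))@_m = \sum_i v 0 i * ((F^`M(i))@_m)%:~R.
Proof.
rewrite /Dv raddf_sum /=; apply: eq_bigr => i _.
by rewrite mcoeffZ mcoeff_deriv mcoeff_map_mpoly mcoeff_deriv rmorphMn.
Qed.

Lemma Dcoef (K : fieldType) (v : 'rV[K]_n.+1) :
  (Dv v (map_mpoly intr F) = 0) <-> (v *m map_mx intr Wt = 0).
Proof.
split => [hD|hW].
  apply/matrixP => a j; rewrite (ord1 a) !mxE -[RHS](mcoeff0 _ (nth 0%MM Ls j)) -hD coefD.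
  by apply: eq_bigr => i _; rewrite !mxE.
apply/mpolyP => m; rewrite coefD mcoeff0.
case: (boolP (m \in Ls)) => mL.
  have jl : (index m Ls < size Ls)%N by rewrite index_mem.
  move/matrixP: hW => /(_ 0 (Ordinal jl)); rewrite !mxE => h; apply: (etrans _ h).
  by apply: eq_bigr => i _; rewrite !mxE /= nth_index.
rewrite big1 // => i _; rewrite memN_msupp_eq0 ?mulr0 //.
apply: contra mL => hm; apply/flattenP; exists (msupp (F^`M(i))) => //.
by apply: map_f; rewrite mem_enum.
Qed.

Lemma order_equiv (K : fieldType) (G : {mpoly K[n.+1]}) :
  is_order G n.+1 <-> ~ equiv_to_m_vars G n.
Proof.
split => [[_ h] /h|h]; first by rewrite ltnn.
split.
  exists 1%:M; split; first exact: unitmx1.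
  by rewrite comp_lin1 => m _ i; rewrite leqNgt ltn_ord.
move=> k hk; rewrite leqNgt; apply/negP => lt; apply: h.
case: hk => A [uA hA]; exists A; split => // m hm i hi.
rewrite ltnS in lt; exact: hA hm i (leq_trans lt hi).
Qed.

Lemma homog_map (K : fieldType) : F \is d.-homog -> (map_mpoly intr F : {mpoly K[n.+1]}) \is d.-homog.
Proof.
move=> hF; apply/dhomogP => m; rewrite mcoeff_msupp mcoeff_map_mpoly => hm.
apply: (dhomog_mf hF); rewrite mcoeff_msupp; apply: contra hm => /eqP ->.
by rewrite raddf0.
Qed.

End Main.

Lemma intr_Fp_eq0 p (z : int) : prime p -> ((z%:~R : 'F_p) == 0) = (p %| `|z|%N)%N.
Proof.
move=> pp; rewrite (dvdn_pcharf (pchar_Fp pp)).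
case: z => k; first by rewrite /= -pmulrn.
by rewrite NegzE mulrNz oppr_eq0 -pmulrn.
Qed.

Unset Implicit Arguments.
Set Strict Implicit.

Theorem theorem3p12 (n d : nat) (F : {mpoly int[n.+1]}) (hF : F \is d.-homog) :
  is_order (to_rat F) n.+1 <->
  exists S : seq nat, forall p : nat, prime p -> p \notin S ->
    is_order (red_mod p F) n.+1.
Proof.
split.
  move=> hQ; have hQ' := (order_equiv (to_rat F)).1 hQ.
  pose Gm := Wt F *m (Wt F)^T.
  have dGm : \det Gm != 0.
    apply/negP => /eqP d0.
    pose GQ := map_mx (intr : int -> rat) Gm.
    have nu : GQ \notin unitmx by rewrite unitmxE unitfE det_map_mx d0 rmorph0 eqxx.
    have : kermx GQ != 0 by rewrite kermx_eq0 row_free_unit.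
    case/matrix0Pn => i [j hij].
    pose u := row i (kermx GQ).
    have u0 : u != 0 by apply/matrix0Pn; exists 0, j; rewrite mxE.
    have uG : u *m GQ = 0 by rewrite -row_mul mulmx_ker row0.
    pose WQ := map_mx (intr : int -> rat) (Wt F).
    pose y := u *m WQ.
    have GQE : GQ = WQ *m WQ^T by rewrite /GQ map_mxM map_trmx.
    have y0 : y = 0.
      have : (y *m y^T) 0 0 = 0.
        by rewrite /y trmx_mul mulmxA -(mulmxA u) -GQE uG !mul0mx mxE.
      rewrite mxE => /eqP; rewrite psumr_eq0 => [/allP h|k _]; last first.
        by rewrite [y^T _ _]mxE -expr2 sqr_ge0.
      apply/matrixP => a b; rewrite (ord1 a) !mxE.
      have := h b (mem_index_enum b); rewrite /= [y^T _ _]mxE mulf_eq0 orbb => /eqP; rewrite !mxE; apply.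
    have hD : Dv u (to_rat F) = 0 by exact: (proj2 (Dcoef F u) y0).
    apply: hQ'; apply: (E2 (d:=d) _ _ u0 hD); first exact: homog_map.
    by move=> k /andP[k0 _]; rewrite pnatr_eq0 -lt0n.
  exists (iota 0 (`|\det Gm|%N).+1) => p pp pS.
  apply/order_equiv => heq.
  case: (E1 heq) => u [u0 hu].
  move/Dcoef: hu => hW.
  pose GP := map_mx (intr : int -> 'F_p) Gm.
  have uGP : u *m GP = 0 by rewrite /GP map_mxM mulmxA hW mul0mx.
  have uP : GP \in unitmx.
    rewrite unitmxE unitfE det_map_mx intr_Fp_eq0 //; apply/negP => /dvdn_leq.
    rewrite absz_gt0 dGm => /(_ isT) hle.
    by move: pS; rewrite mem_iota /= add0n ltnS hle.
  by move/negP: u0; apply; rewrite -(mulmxK uP u) uGP mul0mx.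
case=> S hS; apply/order_equiv => heq.
case: (E1 heq) => u [u0 hu]; move/Dcoef: hu => hW.
pose w : 'rV[int]_n.+1 := \row_i (numq (u 0 i) * \prod_(j | j != i) denq (u 0 j)).
pose c : rat := (\prod_j denq (u 0 j))%:~R.
have c0 : c != 0.
  by rewrite intr_eq0; apply/prodf_neq0 => j _; exact: denq_neq0.
have wc : map_mx intr w = c *: u.
  apply/matrixP => a i; rewrite (ord1 a) !mxE rmorphM rmorph_prod /= numqE.
  by rewrite /c rmorph_prod [in RHS](bigD1 i) //= [RHS]mulrC mulrA.
have ww : w *m Wt F = 0.
  have : map_mx (intr : int -> rat) (w *m Wt F) = 0.
    by rewrite map_mxM wc -scalemxAl hW scaler0.
  move/matrixP => h; apply/matrixP => a b; move: (h a b); rewrite !mxE.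
  by move/eqP; rewrite intr_eq0 => /eqP.
have w0 : w != 0.
  apply/eqP => w0; have cu : c *: u = 0 by rewrite -wc w0 map_mx0.
  by move/eqP: cu; rewrite scaler_eq0 (negbTE c0) /= (negbTE u0).
case/matrix0Pn: w0 => a [k hk].
case: (prime_above (\sum_(x <- S) x + d + `|w a k|)%N) => p lp pp.
have pS : p \notin S.
  apply/negP => pin; have : (p <= \sum_(x <- S) x)%N by rewrite (big_rem p) //= leq_addr.
  move: lp; rewrite -addnA => lp hle.
  by move: (leq_ltn_trans hle (leq_ltn_trans (leq_addr _ _) lp)); rewrite ltnn.
apply: ((order_equiv (red_mod p F)).1 (hS p pp pS)).
have Fk : forall z : int, (0 < `|z|)%N -> (`|z| < p)%N -> (z%:~R : 'F_p) != 0.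
  move=> z z0 zp; rewrite intr_Fp_eq0 //; apply/negP => /(dvdn_leq z0).
  by rewrite leqNgt zp.
apply: (E2 (d:=d) (v := map_mx intr w)).
- exact: homog_map.
- move=> k' /andP[k0 kd]; rewrite -(dvdn_pcharf (pchar_Fp pp)).
  apply/negP => /(dvdn_leq k0) => hle.
  have : (p <= d)%N by apply: leq_trans hle kd.
  move: lp; set s := (\sum_(x <- S) x)%N; set t := `|w a k|%N; lia.
- apply/matrix0Pn; exists a, k; rewrite mxE; apply: Fk; first by rewrite absz_gt0.
  move: lp; set s := (\sum_(x <- S) x)%N; set t := `|w a k|%N; lia.
apply/Dcoef; by rewrite -map_mxM ww map_mx0.
Qed.
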